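(* Let $n\ge1$, $p$ a prime, $0\le i\le j\le n$, $L_0=(p^2\mathbb Z)^i\times(p\mathbb Z)^{j-i}\times\mathbb Z^{n-j}$, and let $B:\mathbb Z^n\to\mathbb C$ be a function such that $\sum_{A\in H_{i,j}\backslash\mathrm{GL}_n(\mathbb Z)}\sum_{\lambda\in L_0}B({}^tA\lambda)$ converges absolutely. Then \[ \sum_{A\in H_{i,j}\backslash\mathrm{GL}_n(\mathbb Z)}\sum_{\lambda\in L_0}B({}^tA\lambda)=a_0\sum_{\lambda\in\mathbb Z^n}B(\lambda)+a_1\sum_{\lambda\in\mathbb Z^n}B(p\lambda)+a_2\sum_{\lambda\in\mathbb Z^n}B(p^2\lambda), \] where $a_0,a_1,a_2$ are integers with $a_0+a_1+a_2=|H_{i,j}\backslash\mathrm{GL}_n(\mathbb Z)|$, $a_0+a_1=|H_{i,j}\backslash S_i|$ and $a_0=|H_{i,j}\backslash S_{i,j}|$.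
   Context: $\delta_{i,j}=\mathrm{diag}(1_i,p1_{j-i},p^21_{n-j})$; $H_{i,j}=\delta_{i,j}\mathrm{GL}_n(\mathbb Z)\delta_{i,j}^{-1}\cap\mathrm{GL}_n(\mathbb Z)$ acting by left multiplication. $S_i$ is the set of $A\in\mathrm{GL}_n(\mathbb Z)$ such that the first $i$ entries of the last row of $A^{-1}$ are divisible by $p$; $S_{i,j}$ is the set of $A\in\mathrm{GL}_n(\mathbb Z)$ such that in the last row of $A^{-1}$ the first $i$ entries are divisible by $p^2$ and the next $j-i$ are divisible by $p$. *)

(* Defs.v *)
From Stdlib Require Import ClassicalEpsilon.
From mathcomp Require Import all_boot all_algebra.
From mathcomp Require Import reals complex.
Import GRing.Theory Num.Theory.

Set Implicit Arguments.
Unset Strict Implicit.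
Unset Printing Implicit Defensive.

Local Open Scope ring_scope.

Section Summation.
Variable (R : realType) (T : countType).
Local Open Scope complex_scope.

(* f : T -> C is summable with sum s (limit of finite partial sums along the
   directed set of finite subsets of T) *)
Definition has_sum (f : T -> R[i]) (s : R[i]) : Prop :=
  forall e : R[i], 0 < e -> exists F0 : seq T,
    forall F : seq T, uniq F -> {subset F0 <= F} ->
      `|\sum_(x <- F) f x - s| < e.

Definition abs_summable (f : T -> R[i]) : Prop :=
  exists M : R[i], forall F : seq T, uniq F -> \sum_(x <- F) `|f x| <= M.

Definition summable (f : T -> R[i]) : Prop := exists s, has_sum f s.

(* the value of the sum, (0 by convention if it does not exist) *)
Definition tsum (f : T -> R[i]) : R[i] :=
  match excluded_middle_informative (summable f) with
  | left h => proj1_sig (constructive_indefinite_description _ h)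
  | right _ => 0
  end.
End Summation.

(* ---------- the objects of the paper (with n replaced by n.+1, indices 0-based) ---------- *)
Section Objects.
Variables (n p i j : nat).

Definition delta : 'M[int]_n.+1 :=
  \matrix_(k, l) (if k == l then
                    (if (k < i)%N then 1 else if (k < j)%N then p%:Z else (p ^ 2)%:Z)
                  else 0).

(* GL_n(Z) is  [A \in unitmx]  (det = +-1).
   H_{i,j} = delta GL_n(Z) delta^{-1} \cap GL_n(Z); h = delta g delta^{-1} <-> h delta = delta g *)
Definition inH (h : 'M[int]_n.+1) : Prop :=
  h \in unitmx /\ exists g : 'M[int]_n.+1, g \in unitmx /\ h *m delta = delta *m g.

Definition inS_i (A : 'M[int]_n.+1) : bool :=
  (A \in unitmx) &&
  [forall k : 'I_n.+1, (k < i)%N ==> (p%:Z %| invmx A ord_max k)%Z].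

Definition inS_ij (A : 'M[int]_n.+1) : bool :=
  (A \in unitmx) &&
  [forall k : 'I_n.+1,
     ((k < i)%N ==> ((p ^ 2)%:Z %| invmx A ord_max k)%Z) &&
     ((i <= k < j)%N ==> (p%:Z %| invmx A ord_max k)%Z)].

Definition inL0 (lam : 'cV[int]_n.+1) : bool :=
  [forall k : 'I_n.+1,
     ((k < i)%N ==> ((p ^ 2)%:Z %| lam k ord0)%Z) &&
     ((i <= k < j)%N ==> (p%:Z %| lam k ord0)%Z)].
End Objects.

Arguments delta : clear implicits.
Arguments inH : clear implicits.
Arguments inS_i : clear implicits.
Arguments inS_ij : clear implicits.
Arguments inL0 : clear implicits.

(* Main.v *)
Require Import Defs.
From mathcomp Require Import all_boot all_algebra.
From mathcomp Require Import reals complex.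
From Stdlib Require Import ClassicalEpsilon.
From mathcomp Require Import all_order all_fingroup classical_sets ring.
Import Order.TTheory GRing.Theory Num.Theory.
Set Implicit Arguments.
Unset Strict Implicit.
Unset Printing Implicit Defensive.
Local Open Scope ring_scope.

Section Ana.
Variable (R : realType).
Local Notation C := R[i].
Local Open Scope complex_scope.

Lemma has_sum_ext (T : countType) (f g : T -> C) s :
  (forall x, f x = g x) -> has_sum f s -> has_sum g s.
Proof.
move=> fg hf e e0; have [F0 HF0] := hf e e0; exists F0 => F uF sF.
by rewrite -(eq_bigr _ (fun x _ => fg x)); apply: HF0.
Qed.

Lemma has_sum_unique (T : countType) (f : T -> C) s t :
  has_sum f s -> has_sum f t -> s = t.
Proof.
move=> hs ht; apply/eqP; apply/negPn/negP => nst.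
have e0 : 0 < `|s - t| / 2 by rewrite divr_gt0 // normr_gt0 subr_eq0.
have [F0 H0] := hs _ e0; have [F1 H1] := ht _ e0.
set F := undup (F0 ++ F1).
have uF : uniq F by apply: undup_uniq.
have s0 : {subset F0 <= F} by move=> x xF; rewrite mem_undup mem_cat xF.
have s1 : {subset F1 <= F} by move=> x xF; rewrite mem_undup mem_cat xF orbT.
have := H0 F uF s0; have := H1 F uF s1.
set S := \sum_(x <- F) f x => h1 h0.
have : `|s - t| < `|s - t| / 2 + `|s - t| / 2.
  have E : s - t = (S - t) - (S - s) by ring.
  rewrite {1}E.
  apply: (le_lt_trans (ler_normB _ _)).
  exact: ltrD h1 h0.
by rewrite -splitr ltxx.
Qed.

Lemma tsum_eq (T : countType) (f : T -> C) s : has_sum f s -> tsum f = s.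
Proof.
move=> hs; rewrite /tsum; case: excluded_middle_informative => [h|[]];
  last by exists s.
case: constructive_indefinite_description => t /= ht.
exact: has_sum_unique ht hs.
Qed.

Lemma has_sum0 (T : countType) : has_sum (fun _ : T => 0 : C) 0.
Proof.
move=> e e0; exists [::] => F _ _; by rewrite big1 // subr0 normr0.
Qed.

Lemma has_sumD (T : countType) (f g : T -> C) s t :
  has_sum f s -> has_sum g t -> has_sum (fun x => f x + g x) (s + t).
Proof.
move=> hf hg e e0.
have e2 : 0 < e / 2 by rewrite divr_gt0.
have [F0 H0] := hf _ e2; have [F1 H1] := hg _ e2.
exists (F0 ++ F1) => F uF sF.
have s0 : {subset F0 <= F} by move=> x xF; apply: sF; rewrite mem_cat xF.
have s1 : {subset F1 <= F} by move=> x xF; apply: sF; rewrite mem_cat xF orbT.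
rewrite big_split /=.
have -> : \sum_(x <- F) f x + \sum_(x <- F) g x - (s + t) =
  (\sum_(x <- F) f x - s) + (\sum_(x <- F) g x - t) by ring.
rewrite [e]splitr; apply: (le_lt_trans (ler_normD _ _)).
by apply: ltrD; [apply: H0 | apply: H1].
Qed.

Lemma has_sumZ (T : countType) (f : T -> C) s c :
  has_sum f s -> has_sum (fun x => c * f x) (c * s).
Proof.
move=> hf e e0.
have e1 : 0 < e / (`|c| + 1) by rewrite divr_gt0 // ltr_pwDr.
have [F0 H0] := hf _ e1; exists F0 => F uF sF.
rewrite -mulr_sumr -mulrBr normrM.
have := H0 F uF sF => h.
apply: (le_lt_trans (y := (`|c| + 1) * `|\sum_(x <- F) f x - s|)).
  by rewrite ler_wpM2r // lerDl.
by rewrite mulrC -ltr_pdivlMr // ltr_pwDr.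
Qed.

Lemma has_sum_bij (T U : countType) (h : U -> C) (phi : T -> U) (psi : U -> T) s :
  cancel phi psi -> cancel psi phi ->
  has_sum (fun x => h (phi x)) s -> has_sum h s.
Proof.
move=> c1 c2 hf e e0; have [F0 H0] := hf _ e0.
exists (map phi F0) => F uF sF.
have uF' : uniq (map psi F) by rewrite map_inj_uniq //; apply: can_inj c2.
have sF' : {subset F0 <= map psi F}.
  move=> x xF; rewrite -(c1 x); apply: map_f; apply: sF; exact: map_f.
have := H0 _ uF' sF'; rewrite big_map.
by under eq_bigr do rewrite c2.
Qed.

Lemma has_sum_fiber (I : finType) (U : countType) (h : I * U -> C) s :
  has_sum h s -> has_sum (fun u => \sum_k h (k, u)) s.
Proof.
move=> hf e e0; have [F0 H0] := hf _ e0.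
exists (map snd F0) => G uG sG.
set F := [seq (k, u) | k <- enum I, u <- G].
have uF : uniq F.
  apply: allpairs_uniq => //; first exact: enum_uniq.
  by move=> [a b] [c d] _ _ /=.
have sF : {subset F0 <= F}.
  move=> [k u] kF; apply/allpairsP; exists (k, u) => //=.
  by rewrite mem_enum; split => //; apply: sG; apply: (map_f snd kF).
have := H0 _ uF sF; rewrite big_allpairs exchange_big /=.
by under eq_bigr do rewrite big_enum /=.
Qed.


Definition preim (U V : countType) (iota : U -> V) (y : V) : option U :=
  match excluded_middle_informative (exists x, iota x = y) with
  | left h => Some (proj1_sig (constructive_indefinite_description _ h))
  | right _ => None
  end.

Lemma preimP (U V : countType) (iota : U -> V) x :
  exists x', preim iota (iota x) = Some x' /\ iota x' = iota x.
Proof.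
rewrite /preim; case: excluded_middle_informative => [h|[]]; last by exists x.
by case: constructive_indefinite_description => x' /= hx'; exists x'.
Qed.

Lemma has_sum_inj (U V : countType) (g : V -> C) (iota : U -> V) s :
  injective iota -> (forall y, (forall x, iota x != y) -> g y = 0) ->
  has_sum g s -> has_sum (fun x => g (iota x)) s.
Proof.
move=> inj g0 hg e e0; have [F0 H0] := hg _ e0.
exists (pmap (preim iota) F0) => F uF sF.
set F2 := [seq y <- undup F0 | y \notin map iota F].
have uF' : uniq (map iota F ++ F2).
  rewrite cat_uniq map_inj_uniq // uF /= filter_uniq ?undup_uniq // andbT.
  by apply/hasPn => y; rewrite mem_filter => /andP[].
have sF' : {subset F0 <= map iota F ++ F2}.
  move=> y yF; rewrite mem_cat mem_filter mem_undup yF andbT.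
  by case: (y \in map iota F).
have := H0 _ uF' sF'; rewrite big_cat big_map /= [X in _ + X - _]big1_seq ?addr0 //.
move=> y /andP[_]; rewrite mem_filter => /andP[ny yF]; apply: g0 => x; apply/negP => /eqP exy.
move: ny; rewrite -exy map_f //; apply: sF.
have [x' [hx' ex']] := preimP iota x.
rewrite (inj _ _ ex') in hx'.
rewrite mem_pmap; apply/mapP; exists (iota x) => //.
by rewrite exy; move: yF; rewrite mem_undup.
Qed.

Lemma sum_sub_le (T : countType) (g : T -> R) F0 F :
  (forall x, 0 <= g x) -> uniq F0 -> uniq F -> {subset F0 <= F} ->
  \sum_(x <- F0) g x <= \sum_(x <- F) g x.
Proof.
move=> g0 u0 u sF.
rewrite [X in _ <= X](bigID (fun x => x \in F0)) /=.
have -> : \sum_(i <- F | i \in F0) g i = \sum_(i <- F0) g i.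
  rewrite -big_filter.
  apply: perm_big; apply: uniq_perm; rewrite ?filter_uniq //.
  by move=> x; rewrite mem_filter; case xF0: (x \in F0) => //=; rewrite sF.
by rewrite lerDl sumr_ge0.
Qed.

Lemma nonneg_has_sum (T : countType) (g : T -> R) M :
  (forall x, 0 <= g x) -> (forall F, uniq F -> \sum_(x <- F) g x <= M) ->
  exists s : R, has_sum (fun x => (g x)%:C) s%:C.
Proof.
move=> g0 gM.
set E : set R := fun y => exists F, uniq F /\ y = \sum_(x <- F) g x.
have hE : has_sup E.
  split; first by exists 0; exists [::]; rewrite big_nil.
  by exists M => y [F [uF ->]]; apply: gM.
exists (sup E) => e e0.
have r0 : 0 < complex.Re e by move: e0; rewrite ltcE => /andP[_].
have [y [F0 [u0 ey]] hy] := sup_adherent r0 hE; rewrite ey in hy.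
exists F0 => F uF sF.
have le1 := sum_sub_le g0 u0 uF sF.
have le2 : \sum_(x <- F) g x <= sup E by apply: sup_upper_bound => //; exists F.
rewrite -(raddf_sum (real_complex R)) -raddfB.
have -> : `|(\sum_(i <- F) g i - sup E)%:C| = (`|\sum_(i <- F) g i - sup E|)%:C.
  by rewrite normc_def /= expr0n /= addr0 sqrtr_sqr.
move: e0; rewrite !ltcE /= => /andP[-> _] /=.
rewrite ler0_norm ?subr_le0 // opprB ltrBlDr addrC -ltrBlDr.
exact: lt_le_trans hy le1.
Qed.


Lemma ReD (a b : C) : complex.Re (a + b) = complex.Re a + complex.Re b.
Proof. by case: a; case: b. Qed.

Lemma Re_sum (T : Type) (u : T -> C) (F : seq T) :
  complex.Re (\sum_(x <- F) u x) = \sum_(x <- F) complex.Re (u x).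
Proof.
elim: F => [|x F IH]; first by rewrite !big_nil.
by rewrite !big_cons ReD IH.
Qed.

Lemma max_split (a : R) : a = Num.max a 0 - Num.max (- a) 0.
Proof.
case: (leP 0 a) => ha.
  by rewrite (max_r (x := - a)) ?subr0 // oppr_le0.
by rewrite (max_l (x := - a)) ?sub0r ?opprK // oppr_ge0 ltW.
Qed.

Lemma max_le_sqrt (a b : R) : Num.max a 0 <= Num.sqrt (a ^+ 2 + b ^+ 2).
Proof.
rewrite ge_max sqrtr_ge0 andbT.
apply: (le_trans (ler_norm a)); rewrite -sqrtr_sqr ler_wsqrtr //.
by rewrite lerDl sqr_ge0.
Qed.

Lemma abs_nonneg_part (T : countType) (f : T -> C) (psi : C -> R) :
  abs_summable f -> (forall z, 0 <= psi z) ->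
  (forall z, psi z <= complex.Re `|z|) ->
  exists s : R, has_sum (fun x => (psi (f x))%:C) s%:C.
Proof.
move=> [M hM] p0 pM; apply: (@nonneg_has_sum _ _ (complex.Re M)) => // F uF.
have := hM F uF; rewrite lecE => /andP[_]; rewrite Re_sum => h.
by apply: le_trans h; apply: ler_sum => x _.
Qed.

Lemma abs_summable_summable (T : countType) (f : T -> C) :
  abs_summable f -> summable f.
Proof.
move=> hf.
have nb (a b : R) : Num.max a 0 <= complex.Re `|a +i* b|.
  by rewrite normc_def /=; apply: max_le_sqrt.
have nb' (a b : R) : Num.max b 0 <= complex.Re `|a +i* b|.
  by rewrite normc_def /= addrC; apply: max_le_sqrt.
have nN (z : C) : `|- z| = `|z| by rewrite normrN.
have b1 (z : C) : Num.max (complex.Re z) 0 <= complex.Re `|z|.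
  by case: z => a b; apply: nb.
have b2 (z : C) : Num.max (complex.Re (- z)) 0 <= complex.Re `|z|.
  by rewrite -nN; case: (- z) => a b; apply: nb.
have b3 (z : C) : Num.max (complex.Im z) 0 <= complex.Re `|z|.
  by case: z => a b; apply: nb'.
have b4 (z : C) : Num.max (complex.Im (- z)) 0 <= complex.Re `|z|.
  by rewrite -nN; case: (- z) => a b; apply: nb'.
have p0 : forall a : R, 0 <= Num.max a 0 by move=> a; rewrite le_max lexx orbT.
have [s1 h1] := abs_nonneg_part hf (fun z => p0 _) b1.
have [s2 h2] := abs_nonneg_part hf (fun z => p0 _) b2.
have [s3 h3] := abs_nonneg_part hf (fun z => p0 _) b3.
have [s4 h4] := abs_nonneg_part hf (fun z => p0 _) b4.
exists (s1%:C + (-1) * s2%:C + 'i * (s3%:C + (-1) * s4%:C)).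
apply: has_sum_ext; last first.
  apply: has_sumD; first exact: has_sumD h1 (has_sumZ (-1) h2).
  exact: (has_sumZ 'i%C (has_sumD h3 (has_sumZ (-1) h4))).
move=> x /=; case: (f x) => a b /=.
rewrite !mulN1r -!raddfB /= -!max_split.
by rewrite [a +i* b]complexE.
Qed.


Lemma abs_comp_inj (T U : countType) (f : T -> C) (psi : U -> T) :
  abs_summable f -> injective psi -> abs_summable (fun x => f (psi x)).
Proof.
move=> [M hM] ipsi; exists M => F uF.
rewrite -(big_map psi xpredT (fun y => `|f y|)); apply: hM.
by rewrite map_inj_uniq.
Qed.

Lemma abs_fiber (I : finType) (U : countType) (h : I * U -> C) :
  abs_summable h -> abs_summable (fun u => \sum_k `|h (k, u)|).
Proof.
move=> [M hM]; exists M => G uG.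
set F := [seq (k, u) | k <- enum I, u <- G].
have uF : uniq F.
  apply: allpairs_uniq => //; first exact: enum_uniq.
  by move=> [a b] [c d] _ _ /=.
apply: le_trans (hM F uF); rewrite big_allpairs exchange_big /=.
apply: ler_sum => u _; rewrite big_enum /= ger0_norm //.
by apply: sumr_ge0 => k _.
Qed.

Lemma abs_dom (U : countType) (g phi : U -> C) :
  abs_summable g -> (forall u, `|phi u| <= `|g u|) -> abs_summable phi.
Proof.
move=> [M hM] hd; exists M => F uF; apply: le_trans (hM F uF).
by apply: ler_sum => u _.
Qed.

Lemma term (U V : countType) (phi : V -> C) (psi : U -> C) (a : int)
  (iota : U -> V) :
  injective iota -> (forall y, (forall x, iota x != y) -> phi y = 0) ->
  (forall x, phi (iota x) = psi x) ->
  (a != 0 -> abs_summable phi) ->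
  (a != 0 -> summable psi) /\
  has_sum (fun y => a%:~R * phi y) (a%:~R * tsum psi).
Proof.
move=> inj z0 e ha; case: (eqVneq a 0) => [->|a0].
  split => //; rewrite mul0r.
  by apply: has_sum_ext (has_sum0 V) => y; rewrite mul0r.
have [s hs] := abs_summable_summable (ha a0).
have hpsi : has_sum psi s.
  by apply: has_sum_ext (has_sum_inj inj z0 hs) => x; rewrite e.
split; first by exists s.
by rewrite (tsum_eq hpsi); apply: has_sumZ.
Qed.

End Ana.

Section Mx.
Variable N : nat.
Local Notation M := 'M[int]_N.+1.

Lemma invmxM_u (A B : M) : A \in unitmx -> B \in unitmx ->
  invmx (A *m B) = invmx B *m invmx A.
Proof.
move=> uA uB; have uAB : A *m B \in unitmx by rewrite unitmx_mul uA.
have e : A *m B *m (invmx B *m invmx A) = 1%:M.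
  by rewrite mulmxA mulmxK // mulmxV.
by rewrite -[invmx (A *m B)]mulmx1 -e mulmxA mulVmx // mul1mx.
Qed.

Lemma invmx_invmx (A : M) : A \in unitmx -> invmx (invmx A) = A.
Proof.
move=> uA; have uA' : invmx A \in unitmx by rewrite unitmx_inv.
by rewrite -[invmx (invmx A)]mulmx1 -(mulVmx uA) mulmxA mulVmx // mul1mx.
Qed.

Definition divv (c : int) (v : 'cV[int]_N.+1) := [forall l, (c %| v l ord0)%Z].

Lemma divv_mul c (Y : M) v : divv c v -> divv c (Y *m v).
Proof.
move=> /forallP h; apply/forallP => l; rewrite mxE.
by apply: rpred_sum => k _; apply: dvdz_mull.
Qed.

End Mx.

Section Delta.
Variables (n p i j : nat).
Hypothesis p_pr : prime p.
Local Notation M := 'M[int]_n.+1.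
Local Notation dl := (delta n p i j).

Lemma delta_sym : dl^T = dl.
Proof.
apply/matrixP => k l; rewrite !mxE eq_sym; case: eqP => // ->; by case: (l < i)%N; case: (l < j)%N.
Qed.

Lemma delta_mul_entry (v : 'cV[int]_n.+1) k :
  (dl *m v) k ord0 = dl k k * v k ord0.
Proof.
rewrite mxE (bigD1 k) //= big1 ?addr0 // => l nlk.
by rewrite mxE eq_sym (negbTE nlk) mul0r.
Qed.

Lemma inL0E v : inL0 n p i j v = divv (p ^ 2)%:Z (dl *m v).
Proof.
have p0 : (p%:Z != 0) by rewrite eqz_nat; case: p p_pr.
have pp : (p ^ 2)%:Z = p%:Z * p%:Z by rewrite expnS expn1 PoszM.
apply: eq_forallb => k; rewrite delta_mul_entry mxE eqxx.
case: (ltnP k i) => ki /=.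
  by rewrite mul1r andbT.
case: (ltnP k j) => kj /=.
  by rewrite pp dvdz_mul2l.
by rewrite dvdz_mulr.
Qed.

Lemma inH_rel h : inH n p i j h ->
  exists g : M, [/\ g \in unitmx, h *m dl = dl *m g,
     dl *m h^T = g^T *m dl & dl *m (invmx h)^T = (invmx g)^T *m dl].
Proof.
move=> [uh [g [ug e]]]; exists g; split => //.
  by rewrite -{1}delta_sym -trmx_mul e trmx_mul delta_sym.
have e' : invmx h *m dl = dl *m invmx g.
  rewrite -[invmx h *m dl]mulmx1 -(mulmxV ug) mulmxA -(mulmxA (invmx h)) -e.
  by rewrite mulmxA mulVmx // mul1mx.
by rewrite -{1}delta_sym -trmx_mul e' trmx_mul delta_sym.
Qed.

Lemma inL0_H h v : inH n p i j h ->
  inL0 n p i j ((invmx h)^T *m v) = inL0 n p i j v.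
Proof.
move=> hH; have [g [ug _ e1 e2]] := inH_rel hH.
have uh : h \in unitmx by case: hH.
rewrite !inL0E; apply/idP/idP => hv.
  have -> : v = h^T *m ((invmx h)^T *m v).
    by rewrite mulmxA -trmx_mul mulVmx // trmx1 mul1mx.
  by rewrite mulmxA e1 -mulmxA; apply: divv_mul.
by rewrite mulmxA e2 -mulmxA; apply: divv_mul.
Qed.

Lemma inH1 : inH n p i j 1%:M.
Proof.
split; first by rewrite unitmx1.
by exists 1%:M; rewrite unitmx1 mulmx1 mul1mx.
Qed.

Lemma inH_mulV h1 h2 : inH n p i j h1 -> inH n p i j h2 ->
  inH n p i j (h1 *m invmx h2).
Proof.
move=> H1 H2; have [g1 [ug1 e1 _ _]] := inH_rel H1.
have [g2 [ug2 e2 _ _]] := inH_rel H2.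
have uh1 : h1 \in unitmx by case: H1.
have uh2 : h2 \in unitmx by case: H2.
split; first by rewrite unitmx_mul uh1 unitmx_inv.
exists (g1 *m invmx g2); split; first by rewrite unitmx_mul ug1 unitmx_inv.
have e' : invmx h2 *m dl = dl *m invmx g2.
  rewrite -[invmx h2 *m dl]mulmx1 -(mulmxV ug2) mulmxA -(mulmxA (invmx h2)) -e2.
  by rewrite mulmxA mulVmx // mul1mx.
by rewrite -mulmxA e' mulmxA e1 mulmxA.
Qed.

End Delta.

Section Trans.
Variables (n p i j m : nat) (reps : 'I_m -> 'M[int]_n.+1).
Local Notation M := 'M[int]_n.+1.
Hypothesis ureps : forall k, reps k \in unitmx.
Hypothesis trans : forall A : M, A \in unitmx ->
     exists! k : 'I_m, inH n p i j (A *m invmx (reps k)).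

Lemma sigma_ex (G : M) : G \in unitmx ->
  exists s : 'I_m -> 'I_m, injective s /\
    forall k, inH n p i j (reps k *m invmx G *m invmx (reps (s k))).
Proof.
move=> uG.
have uk k : reps k *m invmx G \in unitmx by rewrite unitmx_mul ureps unitmx_inv.
pose s k := proj1_sig (constructive_indefinite_description _ (trans (uk k))).
have sP k : inH n p i j (reps k *m invmx G *m invmx (reps (s k))) /\
   forall k', inH n p i j (reps k *m invmx G *m invmx (reps k')) -> s k = k'.
  by rewrite /s; case: constructive_indefinite_description.
exists s; split; last by move=> k; case: (sP k).
move=> k1 k2 e.
have [H1 _] := sP k1; have [H2 _] := sP k2.
rewrite -e in H2.
have H12 := inH_mulV H1 H2.
set A1 := reps k1 in H12; set A2 := reps k2 in H12.
have uA1 : A1 \in unitmx by apply: ureps.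
have uA2 : A2 \in unitmx by apply: ureps.
have uG' : invmx G \in unitmx by rewrite unitmx_inv.
have uS : reps (s k1) \in unitmx by apply: ureps.
have uS' : invmx (reps (s k1)) \in unitmx by rewrite unitmx_inv.
rewrite invmxM_u ?unitmx_mul ?uA2 // invmx_invmx // invmxM_u // invmx_invmx //
  in H12.
have E : A1 *m invmx G *m invmx (reps (s k1)) *m (reps (s k1) *m (G *m invmx A2))
   = A1 *m invmx A2.
  rewrite mulmxA mulmxKV // mulmxA mulmxKV //.
rewrite E in H12.
have [k0 [_ u0]] := trans uA1.
have -> : k1 = k0 by apply/esym/u0; rewrite mulmxV //; apply: inH1.
by apply: u0.
Qed.

Lemma card_inv (P : M -> bool) (G : M) : G \in unitmx ->
  (forall h C, inH n p i j h -> C \in unitmx -> P (h *m C) = P C) ->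
  #|[set k | P (reps k *m invmx G)]| = #|[set k | P (reps k)]|.
Proof.
move=> uG Pinv; have [s [si sH]] := sigma_ex uG.
have -> : [set k | P (reps k *m invmx G)] = s @^-1: [set k | P (reps k)].
  apply/setP => k; rewrite !inE.
  by rewrite -(mulmxKV (ureps (s k)) (reps k *m invmx G)) Pinv.
by rewrite card_preimset.
Qed.

End Trans.

Lemma nat_gauss p k c g : prime p -> ~~ (p %| g)%N ->
  (p ^ k %| c * g)%N = (p ^ k %| c)%N.
Proof.
move=> pp ng; apply: Gauss_dvdl; apply: coprimeXl; by rewrite prime_coprime.
Qed.

Lemma nat_case2 p c x : prime p -> (p %| c)%N -> ~~ (p ^ 2 %| c)%N ->
  (p ^ 2 %| c * x)%N = (p %| x)%N.
Proof.
move=> pp pc npc; have p0 : (0 < p)%N by apply: prime_gt0.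
rewrite -(divnK pc) in npc *.
have nc' : ~~ (p %| c %/ p)%N.
  by apply: contra npc => h; rewrite expnS expn1 mulnC dvdn_pmul2l.
rewrite expnS expn1 mulnAC mulnC dvdn_pmul2l // mulnC.
by have := nat_gauss 1 x pp nc'; rewrite !expn1.
Qed.

Section Count.
Variables (n p i j m : nat) (reps : 'I_m -> 'M[int]_n.+1).
Local Notation M := 'M[int]_n.+1.
Hypothesis p_pr : prime p.
Hypothesis ureps : forall k, reps k \in unitmx.
Hypothesis trans : forall A : M, A \in unitmx ->
     exists! k : 'I_m, inH n p i j (A *m invmx (reps k)).

Definition ee : 'cV[int]_n.+1 := delta_mx ord_max ord0.

Definition Pd (d : int) (C : M) := inL0 n p i j ((invmx C)^T *m (d *: ee)).

Lemma mul_ee (X : M) d l : (X *m (d *: ee)) l ord0 = d * X l ord_max.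
Proof.
rewrite mxE (bigD1 ord_max) //= big1 ?addr0.
  by rewrite !mxE !eqxx mulr1 mulrC.
by move=> k nk; rewrite !mxE (negbTE nk) /= mulr0 mulr0.
Qed.

Lemma Pd_inv d h C : inH n p i j h -> C \in unitmx -> Pd d (h *m C) = Pd d C.
Proof.
move=> hH uC; have uh : h \in unitmx by case: hH.
by rewrite /Pd invmxM_u // trmx_mul -mulmxA; apply: inL0_H.
Qed.

Lemma cond_mu d (G A : M) : G \in unitmx -> A \in unitmx ->
  inL0 n p i j ((invmx A)^T *m (G^T *m (d *: ee))) = Pd d (A *m invmx G).
Proof.
move=> uG uA; rewrite /Pd invmxM_u ?unitmx_inv // invmx_invmx //.
by rewrite trmx_mul mulmxA.
Qed.


Lemma Pd_case1 d A : ((p ^ 2)%:Z %| d)%Z -> Pd d A.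
Proof.
move=> hd; apply/forallP => l; rewrite mul_ee mxE.
have hp : (p%:Z %| d)%Z.
  by apply: dvdz_trans hd; rewrite dvdzE /= expnS expn1 dvdn_mulr.
by rewrite !dvdz_mulr ?implybT.
Qed.

Lemma Pd_case2 d A : A \in unitmx -> (p%:Z %| d)%Z -> ~~ ((p ^ 2)%:Z %| d)%Z ->
  Pd d A = inS_i n p i A.
Proof.
move=> uA h1 h2; rewrite /inS_i uA /=; apply: eq_forallb => l.
rewrite mul_ee mxE (dvdz_mulr _ h1) implybT andbT.
move: h1 h2; rewrite !dvdzE /= abszM => h1 h2.
by rewrite nat_case2.
Qed.

Lemma Pd_case3 d A : A \in unitmx -> ~~ (p%:Z %| d)%Z ->
  Pd d A = inS_ij n p i j A.
Proof.
move=> uA h1; rewrite /inS_ij uA /=; apply: eq_forallb => l.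
rewrite mul_ee mxE; move: h1; rewrite !dvdzE /= !abszM => h1.
rewrite mulnC nat_gauss //.
by have := nat_gauss 1 `|invmx A ord_max l| p_pr h1; rewrite expn1 mulnC => ->.
Qed.


Lemma smith_vec (mu : 'cV[int]_n.+1) :
  exists d (G : M), G \in unitmx /\ mu = G^T *m (d *: ee).
Proof.
have [L uL [R uR [dd _ E]]] := int_Smith_normal_form (mu^T).
exists (L ord0 ord0 * dd`_0), (xrow ord0 ord_max R); split.
  by rewrite xrowE unitmx_mul uR andbT unitmx_perm.
apply/matrixP => l z; rewrite (ord1 z) mul_ee.
have -> : mu l ord0 = (mu^T) ord0 l by rewrite mxE.
have -> : (xrow ord0 ord_max R)^T l ord_max = R ord0 l.
  by rewrite mxE /xrow /row_perm mxE tpermR.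
rewrite E mxE (bigD1 ord0) //= big1 ?addr0.
  by rewrite mxE big_ord1 mxE eqxx mulr1n.
move=> b nb; rewrite mxE big_ord1 mxE.
case: eqP => [e|_]; last by rewrite mulr0n mulr0 mul0r.
by move: nb; rewrite -val_eqE /= -e eqxx.
Qed.


Lemma row_ndiv (G : M) : G \in unitmx -> exists l, ~~ (p %| `|G ord_max l|)%N.
Proof.
move=> uG.
case: (pickP (fun l => ~~ (p %| `|G ord_max l|)%N)) => [l hl|hall].
  by exists l.
have hd : (p%:Z %| \det G)%Z.
  rewrite (expand_det_row _ ord_max); apply: rpred_sum => l _.
  apply: dvdz_mulr; rewrite dvdzE /=; move: (hall l) => /= /negbFE //.
move: uG; rewrite unitmxE => /orP[] /eqP e; rewrite e in hd;
  move: hd; rewrite dvdzE /= dvdn1 => /eqP p1; by move: p_pr; rewrite p1.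
Qed.

Lemma mu_div k (G : M) c mu : G \in unitmx -> mu = G^T *m (c *: ee) ->
  [forall l, ((p ^ k)%:Z %| mu l ord0)%Z] = ((p ^ k)%:Z %| c)%Z.
Proof.
move=> uG E; apply/forallP/idP => [h|h l]; last first.
  by rewrite E mul_ee dvdz_mulr.
have [l0 hl0] := row_ndiv uG.
by move: (h l0); rewrite E mul_ee mxE !dvdzE abszM /= nat_gauss.
Qed.

Definition cnt (mu : 'cV[int]_n.+1) :=
  #|[set k | inL0 n p i j ((invmx (reps k))^T *m mu)]|.

Lemma cnt_formula mu : cnt mu =
  if [forall l, ((p ^ 2)%:Z %| mu l ord0)%Z] then m
  else if [forall l, (p%:Z %| mu l ord0)%Z] then #|[set k | inS_i n p i (reps k)]|
  else #|[set k | inS_ij n p i j (reps k)]|.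
Proof.
have [d [G [uG E]]] := smith_vec mu.
have -> : cnt mu = #|[set k | Pd d (reps k *m invmx G)]|.
  by apply: eq_card => k; rewrite !inE E cond_mu.
rewrite (card_inv ureps trans (P := Pd d) uG); last first.
  by move=> h C hH uC; apply: Pd_inv.
rewrite (mu_div 2 uG E).
have -> : [forall l, (p%:Z %| mu l ord0)%Z] = (p%:Z %| d)%Z.
  by have := mu_div 1 uG E; rewrite expn1.
case: ifP => h2.
  rewrite -[RHS]card_ord -cardsT; apply: eq_card => k; rewrite !inE.
  exact: Pd_case1.
case: ifP => h1.
  by apply: eq_card => k; rewrite !inE Pd_case2 ?h2.
by apply: eq_card => k; rewrite !inE Pd_case3 ?h1.
Qed.

End Count.

Unset Implicit Arguments.

Theorem lemma3p7 (R : realType) (n p i j m : nat)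
    (reps : 'I_m -> 'M[int]_n.+1) (B : 'cV[int]_n.+1 -> R[i]) :
  prime p -> (i <= j <= n.+1)%N ->
  (forall k : 'I_m, reps k \in unitmx) ->
  (forall A : 'M[int]_n.+1, A \in unitmx ->
     exists! k : 'I_m, inH n p i j (A *m invmx (reps k))) ->
  abs_summable (fun x : 'I_m * 'cV[int]_n.+1 =>
     if inL0 n p i j x.2 then B ((reps x.1)^T *m x.2) else 0) ->
  exists a0 a1 a2 : int,
    [/\ a0 + a1 + a2 = m%:Z,
        a0 + a1 = #|[set k : 'I_m | inS_i n p i (reps k)]|%:Z,
        a0 = #|[set k : 'I_m | inS_ij n p i j (reps k)]|%:Z,
        [/\ (a0 != 0 -> summable B),
        (a1 != 0 -> summable (fun lam : 'cV[int]_n.+1 => B (p%:Z *: lam))) &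
        (a2 != 0 -> summable (fun lam : 'cV[int]_n.+1 => B ((p ^ 2)%:Z *: lam)))] &
        has_sum (fun x : 'I_m * 'cV[int]_n.+1 =>
                   if inL0 n p i j x.2 then B ((reps x.1)^T *m x.2) else 0)
          (a0%:~R * tsum B
           + a1%:~R * tsum (fun lam : 'cV[int]_n.+1 => B (p%:Z *: lam))
           + a2%:~R * tsum (fun lam : 'cV[int]_n.+1 => B ((p ^ 2)%:Z *: lam)))].
Proof.
move=> pp hij ureps trans habs.
set f := fun x : 'I_m * 'cV[int]_n.+1 =>
  if inL0 n p i j x.2 then B ((reps x.1)^T *m x.2) else 0.
set Si := #|[set k : 'I_m | inS_i n p i (reps k)]|.
set Sij := #|[set k : 'I_m | inS_ij n p i j (reps k)]|.
have m0 : (0 < m)%N.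
  have [k _] := trans 1%:M (unitmx1 _ _); exact: leq_ltn_trans (leq0n k) (ltn_ord k).
have le1 : (Sij <= Si)%N.
  apply: subset_leq_card; apply/fintype.subsetP => k; rewrite !inE /inS_ij /inS_i.
  case/andP => -> /forallP h; apply/forallP => l.
  case/andP: (h l) => h1 _; apply/implyP => li.
  apply: dvdz_trans (implyP h1 li); rewrite dvdzE /= expnS expn1 dvdn_mulr //.
have le2 : (Si <= m)%N by rewrite /Si -[X in (_ <= X)%N]card_ord max_card.
pose h (x : 'I_m * 'cV[int]_n.+1) :=
  if inL0 n p i j ((invmx (reps x.1))^T *m x.2) then B x.2 else 0.
pose phi (x : 'I_m * 'cV[int]_n.+1) := (x.1, (reps x.1)^T *m x.2).
pose psi (x : 'I_m * 'cV[int]_n.+1) := (x.1, (invmx (reps x.1))^T *m x.2).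
have c1 : cancel phi psi.
  move=> [k v]; rewrite /phi /psi /=; congr pair.
  by rewrite mulmxA -trmx_mul mulmxV // trmx1 mul1mx.
have c2 : cancel psi phi.
  move=> [k v]; rewrite /phi /psi /=; congr pair.
  by rewrite mulmxA -trmx_mul mulVmx // trmx1 mul1mx.
have fE x : f x = h (phi x).
  by rewrite /f /h /phi /= mulmxA -trmx_mul mulmxV // trmx1 mul1mx.
have [s hf] := abs_summable_summable habs.
have hh : has_sum h s by apply: (has_sum_bij c1 c2); apply: has_sum_ext hf.
pose g mu := \sum_k h (k, mu).
have hg : has_sum g s := has_sum_fiber hh.
pose cn mu := cnt p i j reps mu.
have sumE (b : R[i]) mu :
    \sum_k (if inL0 n p i j ((invmx (reps k))^T *m mu) then b else 0)
    = (cn mu)%:R * b.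
  rewrite -big_mkcond sumr_const mulr_natl /cn /cnt; congr (_ *+ _).
  by apply: eq_card => k; rewrite inE.
have gE mu : g mu = (cn mu)%:R * B mu by rewrite /g /h /= sumE.
have hfpsi x : f (psi x) = h x by rewrite fE c2.
have afib := abs_fiber (abs_comp_inj habs (can_inj c2)).
have kE mu : \sum_k `|f (psi (k, mu))| = (cn mu)%:R * `|B mu|.
  rewrite -sumE; apply: eq_bigr => k _; rewrite hfpsi /h /=.
  by case: ifP; rewrite ?normr0.
have dom (phi0 : 'cV[int]_n.+1 -> R[i]) :
    (forall mu, phi0 mu != 0 -> phi0 mu = B mu /\ (0 < cn mu)%N) ->
    abs_summable phi0.
  move=> H; apply: (@abs_dom _ _ _ phi0 afib) => mu.
  case: (eqVneq (phi0 mu) 0) => [->|nz]; first by rewrite normr0 normr_ge0.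
  have [-> c0] := H mu nz.
  rewrite kE [X in _ <= X]ger0_norm ?mulr_ge0 ?ler0n ?normr_ge0 //.
  by apply: ler_peMl; rewrite ?normr_ge0 ?ler1n.
have sc (c : int) : c != 0 ->
  [/\ injective (fun lam : 'cV[int]_n.+1 => c *: lam),
   (forall mu : 'cV[int]_n.+1, (forall nu, c *: nu != mu) ->
      (if [forall l, (c %| mu l ord0)%Z] then B mu else 0) = 0) &
   (forall nu : 'cV[int]_n.+1, (if [forall l, (c %| (c *: nu) l ord0)%Z] then B (c *: nu) else 0)
      = B (c *: nu))].
  move=> c0; split.
  - move=> x y /= /matrixP e; apply/matrixP => a b; move: (e a b); rewrite !mxE.
    exact: mulfI.
  - move=> mu H; case: ifP => // /forallP hd; exfalso.
    have := H (\col_l ((mu l ord0) %/ c)%Z); apply/negP; rewrite negbK.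
    apply/eqP/matrixP => a b; rewrite (ord1 b) !mxE mulrC divzK //.
  - move=> nu; rewrite ifT //; apply/forallP => l; rewrite mxE dvdz_mulr //.
have pz : p%:Z != 0 by rewrite eqz_nat -lt0n prime_gt0.
have p2z : (p ^ 2)%:Z != 0 by rewrite eqz_nat expn_eq0 andbT -lt0n prime_gt0.
have cf := cnt_formula pp ureps trans.
have a0s : Sij%:Z != 0 -> abs_summable B.
  move=> a0; apply: dom => mu _; split => //; rewrite /cn cf.
  have : (0 < Sij)%N by rewrite lt0n -eqz_nat.
  case: ifP => // _; case: ifP => // _ h0; exact: leq_trans h0 le1.
have [s0 t0] := term (phi := B) (psi := B) (a := Sij%:Z) (iota := id)
  (@inj_id _) (fun y H => ltac:(by have := H y; rewrite eqxx)) (fun _ => erefl) a0s.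
pose phi1 (mu : 'cV[int]_n.+1) :=
  if [forall l, (p%:Z %| mu l ord0)%Z] then B mu else 0.
pose phi2 (mu : 'cV[int]_n.+1) :=
  if [forall l, ((p ^ 2)%:Z %| mu l ord0)%Z] then B mu else 0.
have [sc1 sc2 sc3] := sc _ pz.
have [sc1' sc2' sc3'] := sc _ p2z.
have a1s : Si%:Z - Sij%:Z != 0 -> abs_summable phi1.
  move=> a1; apply: dom => mu; rewrite /phi1; case: ifP => hd; last by rewrite eqxx.
  move=> _; split => //; rewrite /cn cf hd; case: ifP => // _.
  rewrite lt0n; apply: contra a1 => /eqP si0; rewrite subr_eq0 eqz_nat.
  by move: le1; rewrite /Si /Sij si0 leqn0 eq_sym.
have [s1 t1] := term (phi := phi1) (psi := fun lam : 'cV[int]_n.+1 => B (p%:Z *: lam))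
  (a := Si%:Z - Sij%:Z) sc1 sc2 sc3 a1s.
have a2s : m%:Z - Si%:Z != 0 -> abs_summable phi2.
  move=> a2; apply: dom => mu; rewrite /phi2; case: ifP => hd; last by rewrite eqxx.
  by move=> _; split => //; rewrite /cn cf hd.
have [s2 t2] := term (phi := phi2) (psi := fun lam : 'cV[int]_n.+1 => B ((p ^ 2)%:Z *: lam))
  (a := m%:Z - Si%:Z) sc1' sc2' sc3' a2s.
have ht := has_sumD (has_sumD t0 t1) t2.
have pw (y : 'cV[int]_n.+1) : (Sij%:Z)%:~R * B y + (Si%:Z - Sij%:Z)%:~R * phi1 y
    + (m%:Z - Si%:Z)%:~R * phi2 y = g y.
  rewrite gE /cn cf /phi1 /phi2 !intrB !pmulrn.
  case h2 : [forall l, ((p ^ 2)%:Z %| y l ord0)%Z].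
    have -> : [forall l, (p%:Z %| y l ord0)%Z].
      apply/forallP => l; apply: (@dvdz_trans (p ^ 2)%:Z); last exact: (forallP h2 l).
      by rewrite dvdzE /= expnS expn1 dvdn_mulr.
    ring.
  by case: ifP => h1; ring.
have hg' := has_sum_ext pw ht.
rewrite (has_sum_unique hg hg') in hf.
exists Sij%:Z, (Si%:Z - Sij%:Z), (m%:Z - Si%:Z); split => //; try ring.
Qed.
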